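(* Let $G$ be a group, $K$ a subgroup that is a retract of $G$ with retraction $\phi$, and $L,R$ nonempty subsets of $G$. Then $2\mathrm{S}(G;L,R)$ is weakly connected if and only if $2\mathrm{S}(K;\phi(L),\phi(R))$ is weakly connected and any two elements of $\ker\phi$ are weakly connected to each other in $2\mathrm{S}(G;L,R)$.
   Context: For nonempty subsets $L,R$ of a group $G$, the two-sided group digraph $2\mathrm{S}(G;L,R)$ has vertex set $G$ and a directed arc $(g,h)$ if and only if $h=l^{-1}gr$ for some $l\in L$, $r\in R$. Vertex $g$ is weakly connected to $h$ if there is a sequence $g=g_0,\dots,g_n=h$ with, for each $i$, $(g_{i-1},g_i)$ or $(g_i,g_{i-1})$ an arc (the intermediate vertices may be arbitrary elements of $G$); a digraph is weakly connected if every pair of vertices is weakly connected. A subgroup $K$ of $G$ is a retract of $G$ with retraction $\phi$ if $\phi:G\to G$ is a group homomorphism with $\phi(g)\in K$ for all $g\in G$ and $\phi(k)=k$ for all $k\in K$ (equivalently, $G=\ker\phi\rtimes K$). *)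

(* Defs.v *)
Set Implicit Arguments.

Record Group := {
  carrier :> Type;
  gmul : carrier -> carrier -> carrier;
  ginv : carrier -> carrier;
  gone : carrier;
  gmulA : forall x y z, gmul x (gmul y z) = gmul (gmul x y) z;
  gmul1 : forall x, gmul gone x = x;
  gmulr1 : forall x, gmul x gone = x;
  gmulV : forall x, gmul (ginv x) x = gone;
  gmulrV : forall x, gmul x (ginv x) = gone
}.

Arguments gmul {G} : rename.
Arguments ginv {G} : rename.
Arguments gone {G} : rename.

Definition is_subgroup {G : Group} (K : G -> Prop) : Prop :=
  K gone /\ (forall x y, K x -> K y -> K (gmul x y)) /\ (forall x, K x -> K (ginv x)).

Definition is_hom {G : Group} (phi : G -> G) : Prop :=
  forall x y, phi (gmul x y) = gmul (phi x) (phi y).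

Definition is_retraction {G : Group} (K : G -> Prop) (phi : G -> G) : Prop :=
  is_hom phi /\ (forall g, K (phi g)) /\ (forall k, K k -> phi k = k).

Definition ker {G : Group} (phi : G -> G) : G -> Prop := fun g => phi g = gone.

Definition image {G : Group} (phi : G -> G) (S : G -> Prop) : G -> Prop :=
  fun k => exists s, S s /\ k = phi s.

Definition nonempty {G : Group} (S : G -> Prop) : Prop := exists x, S x.

Definition arc2S {G : Group} (L R : G -> Prop) (g h : G) : Prop :=
  exists l r, L l /\ R r /\ h = gmul (gmul (ginv l) g) r.

(* Weak connectivity in the digraph 2S with vertex set V (a subgroup of G,
   or all of G): a sequence g = g_0, ..., g_n = h of vertices in V with each
   consecutive pair an arc in one direction or the other. *)
Inductive wconn (G : Group) (V L R : G -> Prop) (g : G) : G -> Prop :=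
| wc_refl : V g -> wconn G V L R g g
| wc_fwd h k : wconn G V L R g h -> V k -> arc2S L R h k -> wconn G V L R g k
| wc_bwd h k : wconn G V L R g h -> V k -> arc2S L R k h -> wconn G V L R g k.
Arguments wconn {G} V L R g _.

Definition weakly_connected {G : Group} (V L R : G -> Prop) : Prop :=
  forall g h, V g -> V h -> wconn V L R g h.

Definition fullset (G : Group) : G -> Prop := fun _ => True.

(* Main.v *)
Require Import Defs.
Set Implicit Arguments.

Section S.
Variable G : Group.

Lemma mulK (a b : G) : gmul (gmul a b) (ginv b) = a.
Proof. rewrite <- gmulA, gmulrV, gmulr1. reflexivity. Qed.
Lemma mulVK (a b : G) : gmul (gmul a (ginv b)) b = a.
Proof. rewrite <- gmulA, gmulV, gmulr1. reflexivity. Qed.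

Lemma inv_uniq (x y : G) : gmul x y = gone -> y = ginv x.
Proof.
  intro H. rewrite <- (gmul1 _ y), <- (gmulV _ x), <- gmulA, H, gmulr1. reflexivity.
Qed.

Lemma hom1 (phi : G -> G) : is_hom phi -> phi gone = gone.
Proof.
  intro H. pose proof (H gone gone) as E. rewrite gmul1 in E.
  transitivity (gmul (gmul (phi gone) (phi gone)) (ginv (phi gone))).
  - symmetry. apply mulK.
  - rewrite <- E, gmulrV. reflexivity.
Qed.

Lemma homV (phi : G -> G) x : is_hom phi -> phi (ginv x) = ginv (phi x).
Proof.
  intro H. apply inv_uniq. rewrite <- H, gmulrV. apply hom1; exact H.
Qed.

Lemma wconn_V (V L R : G -> Prop) (g h : G) : wconn V L R g h -> V g /\ V h.
Proof. induction 1; tauto. Qed.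

Lemma wconn_trans V L R (g h k : G) : wconn V L R g h -> wconn V L R h k -> wconn V L R g k.
Proof.
  intros H1 H2. induction H2.
  - exact H1.
  - eapply wc_fwd; eauto.
  - eapply wc_bwd; eauto.
Qed.

Lemma wconn_sym V L R (g h : G) : wconn V L R g h -> wconn V L R h g.
Proof.
  induction 1.
  - constructor; assumption.
  - apply wconn_trans with h; auto.
    destruct (wconn_V H) as [_ Vh].
    eapply wc_bwd; [constructor; exact H0 | exact Vh | exact H1].
  - apply wconn_trans with h; auto.
    destruct (wconn_V H) as [_ Vh].
    eapply wc_fwd; [constructor; exact H0 | exact Vh | exact H1].
Qed.

Lemma map_path K phi L R (a b : G) :
  is_retraction K phi -> wconn (fullset G) L R a b ->
  wconn K (image phi L) (image phi R) (phi a) (phi b).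
Proof.
  intros [Hh [HK _]] W. induction W.
  - constructor. apply HK.
  - eapply wc_fwd; [exact IHW | apply HK |].
    destruct H0 as [l [r [Hl [Hr E]]]].
    exists (phi l), (phi r). split; [exists l; auto|]. split; [exists r; auto|].
    rewrite E, !Hh, homV by exact Hh. reflexivity.
  - eapply wc_bwd; [exact IHW | apply HK |].
    destruct H0 as [l [r [Hl [Hr E]]]].
    exists (phi l), (phi r). split; [exists l; auto|]. split; [exists r; auto|].
    rewrite E, !Hh, homV by exact Hh. reflexivity.
Qed.

Lemma lift_path K phi L R (k0 k : G) :
  is_retraction K phi -> wconn K (image phi L) (image phi R) k0 k ->
  forall g, phi g = k0 -> exists g', phi g' = k /\ wconn (fullset G) L R g g'.
Proof.
  intros [Hh [HK _]] W. induction W; intros g0 Eg.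
  - exists g0. split; [exact Eg | constructor; exact I].
  - destruct (IHW g0 Eg) as [g1 [E1 W1]].
    destruct H0 as [l' [r' [[l [Hl El]] [[r [Hr Er]] E]]]].
    exists (gmul (gmul (ginv l) g1) r). split.
    + rewrite !Hh, homV by exact Hh. rewrite E, E1, El, Er. reflexivity.
    + eapply wc_fwd; [exact W1 | exact I |]. exists l, r. auto.
  - destruct (IHW g0 Eg) as [g1 [E1 W1]].
    destruct H0 as [l' [r' [[l [Hl El]] [[r [Hr Er]] E]]]].
    exists (gmul (gmul l g1) (ginv r)). split.
    + rewrite !Hh, homV by exact Hh. rewrite E1, E, El, Er.
      rewrite !gmulA, gmulrV, gmul1, mulK. reflexivity.
    + eapply wc_bwd; [exact W1 | exact I |]. exists l, r. split; [exact Hl|]. split; [exact Hr|].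
      rewrite !gmulA, gmulV, gmul1, mulVK. reflexivity.
Qed.
End S.

Theorem mainTheorem18 (G : Group) (K : G -> Prop) (phi : G -> G) (L R : G -> Prop) :
  is_subgroup K -> is_retraction K phi -> nonempty L -> nonempty R ->
  (weakly_connected (fullset G) L R <->
   (weakly_connected K (image phi L) (image phi R) /\
    (forall g h, ker phi g -> ker phi h -> wconn (fullset G) L R g h))).
Proof.
  intros HS Hr _ _. split.
  - intros W. split.
    + intros a b Ka Kb. destruct Hr as [Hh [HK Hid]].
      rewrite <- (Hid a Ka), <- (Hid b Kb).
      apply map_path with (K := K); [split; auto | apply W; exact I].
    + intros g h _ _. apply W; exact I.
  - intros [WK Wker] g h _ _.
    destruct HS as [K1 _]. pose proof Hr as [Hh [HK _]].
    destruct (lift_path Hr (WK (phi g) gone (HK g) K1) g eq_refl) as [g1 [E1 W1]].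
    destruct (lift_path Hr (WK (phi h) gone (HK h) K1) h eq_refl) as [h1 [E2 W2]].
    apply wconn_trans with g1; [exact W1|].
    apply wconn_trans with h1; [apply Wker; assumption|].
    apply wconn_sym; exact W2.
Qed.
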